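(* Let $\Omega$ be a $D$-dimensional vector space over a finite field $\mathbb F$, $q=\sqrt{|\mathbb F|}$, and $\lambda\in\mathbb C\setminus\{0\}$. There is a unique $U_q(\mathfrak{sl}_2)$-module structure on $\mathbb C^{\mathcal L(\Omega)}$ such that for all $x\in\mathcal L(\Omega)$: $Ex=\lambda q^{-D}\sum_{x'\subset\mathrel{\cdot} x}x'$, $Fx=\lambda^{-1}q\sum_{x\subset\mathrel{\cdot} x'}x'$, $K^{\pm1}x=q^{\pm(D-2\dim x)}x$.
   Context: $\mathcal L(\Omega)$ is the set of all subspaces of $\Omega$, and $\mathbb C^{\mathcal L(\Omega)}$ is the complex vector space with basis $\mathcal L(\Omega)$. For subspaces $x,x'$, $x'\subset\mathrel{\cdot} x$ means $x'\subseteq x$ and $\dim x'=\dim x-1$ (covering relation). $U_q(\mathfrak{sl}_2)$ is the algebra over $\mathbb C$ generated by $E,F,K^{\pm1}$ with relations $KK^{-1}=K^{-1}K=1$, $qEK-q^{-1}KE=0$, $qKF-q^{-1}FK=0$, $EF-FE=\frac{K-K^{-1}}{q-q^{-1}}$. *)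

(* Defs.v *)
From HB Require Import structures.
From mathcomp Require Import all_boot all_order all_algebra all_field.
From mathcomp Require Import complex.
From mathcomp Require Import Rstruct.
Unset Printing Implicit Defensive.
Import Order.TTheory GRing.Theory Num.Theory.
Local Open Scope ring_scope.

Definition CC : numClosedFieldType := (Rdefinitions.R)[i].

(* L(Omega): the (finite) type of all subspaces of Omega = F^D.
   Omega = F^D as row vectors; its subspaces are {vspace 'rV[F]_D}.
   For F finite, the type of subspaces is finite. *)
Definition subsp (F : finFieldType) (D : nat) := {vspace 'rV[F]_D}.
HB.instance Definition _ (F : finFieldType) (D : nat) :=
  Finite.copy (subsp F D) (can_type (@VectorInternalTheory.vs2mxK F 'rV[F]_D)).

Section Lattice.
Variables (F : finFieldType) (D : nat).
Notation L := (subsp F D).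

Definition covered (x' x : L) : bool := (x' <= x)%VS && ((\dim x').+1 == \dim x).

Definition CL : lmodType CC := {ffun L -> CC^o}.

Definition bvec (x : L) : CL := [ffun y => (y == x)%:R].
End Lattice.
Arguments covered {F D}.
Arguments bvec {F D}.

Definition qF (F : finFieldType) : CC := sqrtC (#|F|%:R).

Definition is_lin (V : lmodType CC) (f : V -> V) : Prop :=
  forall (a : CC) (u v : V), f (a *: u + v) = a *: f u + f v.

Definition Uq_module (q : CC) (V : lmodType CC) (E Fo K Ki : V -> V) : Prop :=
  (@is_lin V E /\ @is_lin V Fo /\ @is_lin V K /\ @is_lin V Ki) /\
  (forall v, K (Ki v) = v) /\ (forall v, Ki (K v) = v) /\
  (forall v, q *: E (K v) - q^-1 *: K (E v) = 0) /\
  (forall v, q *: K (Fo v) - q^-1 *: Fo (K v) = 0) /\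
  (forall v, E (Fo v) - Fo (E v) = (q - q^-1)^-1 *: (K v - Ki v)).

Definition action_on_basis (F : finFieldType) (D : nat) (lam : CC)
  (E Fo K Ki : CL F D -> CL F D) : Prop :=
  let q := qF F in
  forall x : subsp F D,
  [/\ E (bvec x) = (lam * q ^- D) *: \sum_(x' : subsp F D | covered x' x) bvec x',
      Fo (bvec x) = (lam^-1 * q) *: \sum_(x' : subsp F D | covered x x') bvec x',
      K (bvec x) = q ^ (D%:Z - 2 * (\dim x)%:Z) *: bvec x &
      Ki (bvec x) = q ^ (- (D%:Z - 2 * (\dim x)%:Z)) *: bvec x].

(* Main.v *)
Require Import Defs.
From HB Require Import structures.
From mathcomp Require Import all_boot all_order all_algebra all_field.
From mathcomp Require Import zify ring.
Import GRing.Theory Num.Theory.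
Local Open Scope ring_scope.
Section Arith.
Local Open Scope nat_scope.
Lemma arith_up (q k m p : nat) : (0 < q)%N ->
  (p * (q ^ k.+1 - q ^ k) = q ^ (k + m) - q ^ k)%N -> (p * q.-1 + 1 = q ^ m)%N.
Proof.
move=> q0.
have e1 : (q ^ k.+1 - q ^ k = q ^ k * q.-1)%N.
  by rewrite expnS mulnC -{2}[q ^ k]muln1 -mulnBr subn1.
have e2 : (q ^ (k + m) - q ^ k = q ^ k * (q ^ m - 1))%N.
  by rewrite expnD -{2}[q ^ k]muln1 -mulnBr.
rewrite e1 e2 mulnCA => /eqP; rewrite eqn_pmul2l ?expn_gt0 ?q0 // => /eqP ->.
by rewrite subnK // expn_gt0 q0.
Qed.

Lemma arith_down (q s e h : nat) : (1 < q)%N ->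
  (h * (q ^ (s + e.+1) - q ^ s) * q.-1 = (q ^ (s + e.+2) - q ^ s) * (q ^ e.+1 - 1))%N ->
  (h * q.-1 + 1 = q ^ e.+2)%N.
Proof.
move=> q1.
have q0 : (0 < q)%N by apply: ltnW.
set A := (q ^ s)%N; set B := (q ^ e.+1)%N.
have eA : (q ^ (s + e.+1) = A * B)%N by rewrite expnD.
have eA2 : (q ^ (s + e.+2) = A * (B * q))%N by rewrite expnD [(q ^ e.+2)%N]expnSr.
have B1 : (1 < B)%N.
  rewrite /B; apply: (leq_trans q1); rewrite -{1}[q]expn1 leq_pexp2l //.
rewrite eA eA2 -{2}[A]muln1 -mulnBr -{3}[A]muln1 -mulnBr.
move=> E.
have E2 : A * (B - 1) * (h * q.-1) = A * (B - 1) * (B * q - 1).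
  rewrite [RHS](_ : _ = A * (B * q - 1) * (B - 1)); last ring.
  rewrite -E; ring.
have A0 : 0 < A by rewrite /A expn_gt0 q0.
move: E2 => /eqP; rewrite eqn_pmul2l; last by nia.
move=> /eqP ->.
rewrite subnK; [by rewrite /B -expnSr | nia].
Qed.

End Arith.

Section Comb.
Context {F : finFieldType} {D : nat}.
Local Notation L := (subsp F D).
Local Notation V := 'rV[F]_D.
Local Notation Q := #|F|.

Lemma dim_add_line (a : L) (v : V) : v \notin a -> \dim (a + <[v]>)%VS = (\dim a).+1.
Proof.
move=> va.
have h1 := dimv_sum_cap a <[v]>%VS.
have h2 : (\dim <[v]>%VS <= 1)%N by rewrite dim_vline; case: (v != 0).
have h3 : (\dim a < \dim (a + <[v]>)%VS)%N.
  rewrite ltnNge; apply/negP => hle.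
  have : (a : {vspace V}) == (a + <[v]>)%VS by rewrite eqEdim addvSl hle.
  move/eqP => ea; move: va; rewrite ea memvE; apply/negP/negPn; exact: addvSr.
apply/eqP; rewrite eqn_leq h3 andbT.
apply: (leq_trans (leq_addr (\dim (a :&: <[v]>)%VS) _)); rewrite h1 -[(\dim a).+1]addn1 leq_add2l //.
Qed.

Lemma cover_line (a : L) (v : V) : v \notin a -> covered a (a + <[v]>)%VS.
Proof. by move=> va; rewrite /covered addvSl /= dim_add_line. Qed.

Lemma cover_uniq (a y : L) (v : V) : covered a y -> v \in y -> v \notin a ->
  y = (a + <[v]>)%VS.
Proof.
case/andP=> ay /eqP dy vy va.
have s : (a + <[v]> <= y)%VS by rewrite subv_add ay -memvE.
apply/esym/(@eqP {vspace V}); by rewrite eqEdim s dim_add_line // -dy leqnn.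
Qed.

Lemma card_diff (a y : L) : (a <= y)%VS ->
  #|[pred v : V | (v \in y) && (v \notin a)]| = (Q ^ \dim y - Q ^ \dim a)%N.
Proof.
move=> ay; rewrite -!card_vspace.
rewrite -(cardID (mem a) (mem y)).
have -> : #|[predI mem y & mem a]| = #|a|.
  apply: eq_card => v; rewrite !inE; case va: (v \in a) => //=; rewrite ?andbF ?andbT //.
  by rewrite (subvP ay).
rewrite addKn; apply: eq_card => v; rewrite !inE andbC //.
Qed.

Lemma double_count (P : pred L) (R : pred V) (rel : L -> V -> bool) :
  (\sum_(y | P y) #|[pred v | R v && rel y v]|)%N =
  (\sum_(v | R v) #|[pred y | P y && rel y v]|)%N.
Proof.
rewrite (eq_bigr (fun y => \sum_(v | R v && rel y v) 1)%N); last by move=> y _; rewrite sum1_card.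
rewrite [RHS](eq_bigr (fun v => \sum_(y | P y && rel y v) 1)%N); last by move=> v _; rewrite sum1_card.
rewrite (exchange_big_dep R) //=; last by move=> i j _ /andP[].
apply: eq_bigr => v Rv; apply: eq_bigl => y; by rewrite Rv.
Qed.


Lemma up_count (a b : L) : (a <= b)%VS ->
  (#|[pred y : L | covered a y && (y <= b)%VS]| * Q.-1 + 1 = Q ^ (\dim b - \dim a))%N.
Proof.
move=> ab.
have key := double_count [pred y : L | covered a y && (y <= b)%VS]
  [pred v : V | (v \in b) && (v \notin a)] (fun y v => v \in y).
rewrite (eq_bigr (fun _ => Q ^ (\dim a).+1 - Q ^ \dim a)%N) in key; last first.
  move=> y /andP[/andP[ay /eqP dy] yb]; rewrite dy -(card_diff _ _ ay).
  apply: eq_card => v; rewrite !inE; case vy: (v \in y); rewrite ?andbF ?andbT //.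
  by rewrite (subvP yb).
rewrite [RHS](eq_bigr (fun _ => 1%N)) in key; last first.
  move=> v /andP[vb va]; apply: (@eq_card1 _ ((a + <[v]>)%VS : L)) => y; rewrite !inE.
  apply/idP/idP.
    by case/andP=> /andP[ay yb] vy; apply/eqP; apply: cover_uniq.
  move/eqP => ->; rewrite cover_line //= subv_add ab -memvE vb /=.
  by rewrite memvE addvSr.
rewrite sum_nat_const sum1_card card_diff // in key.
have [m dm] : exists m, \dim b = (\dim a + m)%N.
  by exists (\dim b - \dim a)%N; rewrite subnKC // dimvS.
have Q0 : (0 < Q)%N by apply: ltnW; apply: finNzRing_gt1.
rewrite dm addKn; apply: (@arith_up Q (\dim a) m _ Q0).
by rewrite -dm -key.
Qed.


Lemma down_count d : forall a b : L, (a <= b)%VS -> \dim b = (\dim a + d)%N ->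
  (#|[pred h : L | (a <= h)%VS && covered h b]| * Q.-1 + 1 = Q ^ d)%N.
Proof.
have Q1 : (1 < Q)%N by apply: finNzRing_gt1.
elim: d => [|d IH] a b ab db.
  rewrite eq_card0 ?mul0n ?add0n ?expn0 // => h; rewrite !inE.
  apply/negP => /andP[ah /andP[_ /eqP dh]].
  have := dimvS ah; rewrite addn0 in db; rewrite -ltnS dh db ltnn //.
case: d IH db => [|e] IH db.
  rewrite (@eq_card1 _ a); first by rewrite mul1n addn1 expn1 prednK // ltnW.
  move=> h; rewrite !inE; apply/idP/idP.
    case/andP=> ah /andP[_ /eqP dh]; apply/eqP/esym/(@eqP {vspace V}).
    by rewrite eqEdim ah /= -ltnS dh db addn1.
  by move/eqP => ->; rewrite subvv /covered ab db addn1 eqxx.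
have key := double_count [pred h : L | (a <= h)%VS && covered h b]
  [pred v : V | (v \in b) && (v \notin a)] (fun y v => v \in y).
rewrite (eq_bigr (fun _ => Q ^ (\dim a + e.+1) - Q ^ \dim a)%N) in key; last first.
  move=> h /andP[ah /andP[hb /eqP dh]].
  have dh' : \dim h = (\dim a + e.+1)%N by move: dh; rewrite db addnS => -[].
  rewrite -dh' -(card_diff _ _ ah).
  apply: eq_card => v; rewrite !inE; case vh: (v \in h); rewrite ?andbF ?andbT //.
  by rewrite (subvP hb).
rewrite sum_nat_const in key.
have key2 := congr1 (fun n => n * Q.-1)%N key; rewrite /= big_distrl /= in key2.
rewrite (eq_bigr (fun _ => Q ^ e.+1 - 1)%N) in key2; last first.
  move=> v /andP[vb va].
  have H := IH (a + <[v]>)%VS b.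
  rewrite subv_add ab -memvE vb dim_add_line // db addSnnS in H.
  rewrite -(H erefl erefl) addnK; congr (_ * _)%N; apply: eq_card => h; rewrite !inE.
  by rewrite subv_add -memvE andbAC.
rewrite sum_nat_const card_diff // db in key2.
by apply: (@arith_down Q (\dim a) e _ Q1).
Qed.


Lemma dimV : \dim (fullv : {vspace V}) = D.
Proof. by rewrite dimvf /dim /= mul1n. Qed.

Lemma dim_leD (y : L) : (\dim y <= D)%N.
Proof. by have := dimvS (subvf (y : {vspace V})); rewrite dimV. Qed.

Lemma count_up (y : L) :
  (#|[pred x : L | covered y x]| * Q.-1 + 1 = Q ^ (D - \dim y))%N.
Proof.
have := @up_count y fullv (subvf y); rewrite dimV => <-; congr (_ * _ + _)%N.
by apply: eq_card => x; rewrite !inE subvf andbT.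
Qed.

Lemma count_down (y : L) :
  (#|[pred x : L | covered x y]| * Q.-1 + 1 = Q ^ (\dim y))%N.
Proof.
rewrite -(@down_count (\dim y) 0%VS y (sub0v _)) ?dimv0 //.
by congr (_ * _ + _)%N; apply: eq_card => x; rewrite !inE sub0v.
Qed.

Lemma card_cond (c : bool) (w : L) : #|[pred x : L | c && (x == w)]| = c.
Proof.
case: c; last by rewrite eq_card0.
by rewrite (@eq_card1 _ w).
Qed.

Lemma up_uniq (y z x : L) : y != z -> covered y x -> covered z x -> x = (y + z)%VS.
Proof.
move=> yz /andP[yx /eqP dy] /andP[zx /eqP dz].
have s : (y + z <= x)%VS by rewrite subv_add yx zx.
have lt : (\dim y < \dim (y + z)%VS)%N.
  rewrite ltnNge; apply/negP => hle.
  have : (y : {vspace V}) == (y + z)%VS by rewrite eqEdim addvSl hle.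
  move/eqP => e.
  have zy : (z <= y)%VS by rewrite e addvSr.
  have : (z : {vspace V}) == y by rewrite eqEdim zy -ltnS dz -dy ltnSn.
  by move/eqP => ezy; move: yz; rewrite ezy eqxx.
apply/esym/(@eqP {vspace V}); by rewrite eqEdim s -dy.
Qed.

Lemma down_uniq (y z x : L) : y != z -> covered x y -> covered x z -> x = (y :&: z)%VS.
Proof.
move=> yz /andP[xy /eqP dy] /andP[xz /eqP dz].
have s : (x <= y :&: z)%VS by rewrite subv_cap xy xz.
have lt : (\dim (y :&: z)%VS < \dim y)%N.
  rewrite ltnNge; apply/negP => hle.
  have : ((y :&: z)%VS : {vspace V}) == y by rewrite eqEdim capvSl hle.
  move/eqP => e.
  have zy : (y <= z)%VS by rewrite -e capvSr.
  have : (y : {vspace V}) == z by rewrite eqEdim zy -dz -dy leqnn.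
  by move/eqP => ezy; move: yz; rewrite ezy eqxx.
apply/(@eqP {vspace V}); by rewrite eqEdim s -ltnS dy.
Qed.

Lemma offdiag (y z : L) : y != z ->
  #|[pred x : L | covered y x && covered z x]| = #|[pred x : L | covered x y && covered x z]|.
Proof.
move=> yz.
pose c := (\dim y == \dim z) && (\dim (y + z)%VS == (\dim y).+1).
pose c' := (\dim y == \dim z) && ((\dim (y :&: z)%VS).+1 == \dim y).
have e1 : #|[pred x : L | covered y x && covered z x]| = #|[pred x : L | c && (x == ((y + z)%VS : L))]|.
  apply: eq_card => x; rewrite !inE; apply/idP/idP.
    move=> /andP[h1 h2]; have ex := up_uniq _ _ _ yz h1 h2.
    move: h1 h2; rewrite /covered => /andP[_ /eqP d1] /andP[_ /eqP d2].
    rewrite /c -ex eqxx -d1 eqxx andbT /=; by rewrite -eqSS d1 d2 eqxx.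
  case/andP => /andP[/eqP d /eqP dd] /eqP ->.
  by rewrite /covered addvSl addvSr dd -d !eqxx.
have e2 : #|[pred x : L | covered x y && covered x z]| = #|[pred x : L | c' && (x == ((y :&: z)%VS : L))]|.
  apply: eq_card => x; rewrite !inE; apply/idP/idP.
    move=> /andP[h1 h2]; have ex := down_uniq _ _ _ yz h1 h2.
    move: h1 h2; rewrite /covered => /andP[_ /eqP d1] /andP[_ /eqP d2].
    by rewrite /c' -ex d1 -d1 -d2 !eqxx.
  case/andP => /andP[/eqP d /eqP dd] /eqP ->.
  by rewrite /covered capvSl capvSr dd -d !eqxx.
rewrite e1 e2 !card_cond; congr (nat_of_bool _).
rewrite /c /c'; case dyz: (\dim y == \dim z) => //=.
have h := dimv_sum_cap y z; move/eqP: dyz => dyz.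
rewrite -dyz in h.
apply/eqP/eqP => hh.
  by rewrite hh addSn -addnS in h; apply: (addnI h).
by apply: (@addIn (\dim (y :&: z)%VS)); rewrite h addSn -addnS hh.
Qed.

End Comb.
Lemma key_id (K : fieldType) (q C H v : K) (n k : nat) : q != 0 -> q ^+ 2 - 1 != 0 ->
  C * (q ^+ 2 - 1) + 1 = (q ^+ 2) ^+ n -> H * (q ^+ 2 - 1) + 1 = (q ^+ 2) ^+ k ->
  q / q ^+ (n + k) * (C - H) * v =
  (q - q^-1)^-1 * (q ^+ n / q ^+ k * v - q ^+ k / q ^+ n * v).
Proof.
move=> q0 q21 hC hH.
have eC : C = ((q ^+ n) ^+ 2 - 1) / (q ^+ 2 - 1).
  by rewrite -exprM mulnC exprM -hC addrK mulfK.
have eH : H = ((q ^+ k) ^+ 2 - 1) / (q ^+ 2 - 1).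
  by rewrite -exprM mulnC exprM -hH addrK mulfK.
have qn : q ^+ n != 0 by rewrite expf_neq0.
have qk : q ^+ k != 0 by rewrite expf_neq0.
have qq : q - q^-1 != 0.
  apply: contraNneq q21 => e.
  have : q * (q - q^-1) = 0 by rewrite e mulr0.
  by rewrite mulrBr mulfV // -expr2 => ->.
rewrite eC eH exprD.
field.
by rewrite qn qk q0 q21 /=.
Qed.

Section Alg.
Context {F : finFieldType} {D : nat}.
Local Notation L := (subsp F D).
Local Notation CLt := (CL F D).

Definition G (f : L -> CC) (P : L -> L -> bool) (v : CLt) : CLt :=
  [ffun y => f y * \sum_(x | P y x) (v x : CC)].

Lemma CLE (a : CC) (u v : CLt) y : (a *: u + v) y = a * u y + v y.
Proof. by rewrite !ffunE. Qed.

Lemma G_lin f P : is_lin CLt (G f P).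
Proof.
move=> a u v; apply/ffunP => y; rewrite CLE !ffunE.
under eq_bigr do rewrite CLE.
rewrite big_split /=.
have -> : \sum_(i | P y i) a * u i = a * \sum_(i | P y i) (u i : CC) by rewrite mulr_sumr.
by rewrite mulrDr mulrCA.
Qed.

Lemma bvecE (x y : L) : bvec x y = (y == x)%:R.
Proof. by rewrite ffunE. Qed.

Lemma sum_bvecE (P : pred L) (y : L) : (\sum_(x | P x) bvec x) y = (P y)%:R.
Proof.
rewrite sum_ffunE; under eq_bigr do rewrite bvecE.
case Py: (P y).
  rewrite (bigD1 y) //= eqxx (@big1 CC 0 +%R) ?addr0 // => x /andP[_ /negPf]; rewrite eq_sym => ->; done.
by rewrite (@big1 CC 0 +%R) // => x Px; case: eqP => // e; move: Px; rewrite -e Py.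
Qed.

Lemma G_bvec f P x y : G f P (bvec x) y = f y * (P y x)%:R.
Proof.
rewrite ffunE; congr (_ * _); under eq_bigr do rewrite bvecE.
case Pyx: (P y x).
  rewrite (bigD1 x) //= eqxx (@big1 CC 0 +%R) ?addr0 // => z /andP[_ /negPf] -> //.
by rewrite (@big1 CC 0 +%R) // => z Pz; case: eqP => // e; move: Pz; rewrite e Pyx.
Qed.


Lemma G1E f (v : CLt) y : G f (fun y x => x == y) v y = f y * v y.
Proof. by rewrite ffunE (@big_pred1_eq CC). Qed.

Lemma double_sum (P1 : L -> bool) (P2 : L -> L -> bool) (w : L -> CC) :
  \sum_(x | P1 x) \sum_(z | P2 x z) w z =
  \sum_z (#|[pred x | P1 x && P2 x z]|)%:R * w z.
Proof.
rewrite (exchange_big_dep predT) //=; apply: eq_bigr => z _.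
transitivity (\sum_(x in [pred x | P1 x && P2 x z]) w z).
  by apply: eq_bigl => x; rewrite inE.
by rewrite sumr_const mulr_natl.
Qed.


Lemma lin_ext (f g : CLt -> CLt) : is_lin CLt f -> is_lin CLt g ->
  (forall x, f (bvec x) = g (bvec x)) -> f =1 g.
Proof.
move=> hf hg hfg v.
have dec : v = \sum_(x : L) v x *: bvec x.
  apply/ffunP => y; rewrite sum_ffunE (bigD1 y) //= ffunE bvecE eqxx.
  rewrite (@big1 CC 0 +%R) ?addr0 /=; first by symmetry; exact: (@mulr1 CC).
  by move=> x xy; rewrite ffunE bvecE eq_sym (negPf xy); exact: (@mulr0 CC).
have z : forall h : CLt -> CLt, is_lin CLt h -> h 0 = 0.
  move=> h hh; have := hh 1 0 0; rewrite scale1r addr0 => e.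
  by rewrite scale1r in e; apply: (addrI (h 0)); rewrite addr0 -e.
rewrite dec; elim: (index_enum _) => [|x r IH].
  by rewrite !big_nil z ?z.
by rewrite !big_cons hf hg hfg IH.
Qed.

End Alg.

Section Main.
Variables (F : finFieldType) (D : nat) (lam : CC).
Hypothesis hlam : lam != 0.
Local Notation L := (subsp F D).
Local Notation CLt := (CL F D).
Local Notation q := (qF F).
Local Notation Q := #|F|.

Lemma q_sq : q ^+ 2 = Q%:R.
Proof. by rewrite /qF sqrtCK. Qed.

Lemma q_neq0 : q != 0.
Proof.
apply/negP => /eqP q0; have h := q_sq; rewrite q0 expr0n /= in h.
have hQ : (Q%:R : CC) != 0.
  by rewrite pnatr_eq0 -lt0n ltnW // finNzRing_gt1.
by move: hQ; rewrite -h eqxx.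
Qed.

Lemma q21 : q ^+ 2 - 1 != 0.
Proof.
rewrite q_sq subr_eq0 pnatr_eq1; apply/negP => /eqP e.
by have := finNzRing_gt1 F; rewrite e.
Qed.

Lemma natQ (c m : nat) : (c * Q.-1 + 1 = Q ^ m)%N ->
  (c%:R : CC) * (q ^+ 2 - 1) + 1 = (q ^+ 2) ^+ m.
Proof.
move=> h; rewrite q_sq -natrX -h natrD natrM -subn1 natrB //.
exact: ltnW (finNzRing_gt1 F).
Qed.

Definition kf (y : L) : CC := q ^ (D%:Z - 2 * (\dim y)%:Z).
Definition kfi (y : L) : CC := q ^ (- (D%:Z - 2 * (\dim y)%:Z)).

Definition Eop := G (fun _ : L => lam * q ^- D) (fun y x => covered y x).
Definition Fop := G (fun _ : L => lam^-1 * q) (fun y x => covered x y).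
Definition Kop := G kf (fun y x => x == y).
Definition Kiop := G kfi (fun y x => x == y).

Lemma kf_cov (y x : L) : covered y x -> kf x = kf y / q ^+ 2.
Proof.
move=> /andP[_ /eqP dx]; rewrite /kf -dx.
have -> : (D%:Z - 2 * (\dim y).+1%:Z) = (D%:Z - 2 * (\dim y)%:Z) + (- 2%:Z).
  rewrite -addn1 PoszD; ring.
by rewrite expfzDr ?q_neq0 // -exprnN.
Qed.

Lemma kf_kfi (y : L) : kf y * kfi y = 1.
Proof. by rewrite /kf /kfi -expfzDr ?q_neq0 // subrr expr0z. Qed.

Lemma kf_nk (y : L) : kf y = q ^+ (D - \dim y) / q ^+ (\dim y) /\
                       kfi y = q ^+ (\dim y) / q ^+ (D - \dim y).
Proof.
have hD := dim_leD y.
have e : D%:Z - 2 * (\dim y)%:Z = (D - \dim y)%N%:Z + (- (\dim y)%:Z).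
  rewrite -subzn //; ring.
rewrite /kf /kfi e opprD opprK addrC !expfzDr ?q_neq0 // -!exprnN.
by split; rewrite mulrC.
Qed.


Lemma KKi (v : CLt) : Kop (Kiop v) = v.
Proof. apply/ffunP => y; by rewrite /Kop /Kiop !G1E mulrA (kf_kfi y) mul1r. Qed.

Lemma KiK (v : CLt) : Kiop (Kop v) = v.
Proof. by apply/ffunP => y; rewrite /Kop /Kiop !G1E mulrA (mulrC (kfi y)) (kf_kfi y) mul1r. Qed.

Lemma EK (v : CLt) : q *: Eop (Kop v) - q^-1 *: Kop (Eop v) = 0.
Proof.
apply/ffunP => y; rewrite !ffunE /Eop /Kop (@big_pred1_eq CC) ffunE.
under eq_bigr => x Hx do rewrite ffunE (@big_pred1_eq CC) (kf_cov _ _ Hx).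
rewrite -(@mulr_sumr CC).
move: (\sum_(x | covered y x) v x) => S.
change (q * (lam / q ^+ D * (kf y / q ^+ 2 * S)) - q^-1 * (kf y * (lam / q ^+ D * S)) = 0).
have q0 := q_neq0; field.
by rewrite expf_neq0 // q0.
Qed.

Lemma kf_cov' (x y : L) : covered x y -> kf x = kf y * q ^+ 2.
Proof. by move=> h; rewrite (kf_cov _ _ h) divfK // expf_neq0 // q_neq0. Qed.

Lemma KF (v : CLt) : q *: Kop (Fop v) - q^-1 *: Fop (Kop v) = 0.
Proof.
apply/ffunP => y; rewrite !ffunE /Fop /Kop (@big_pred1_eq CC) /G ffunE.
rewrite [X in _ - _ *: (_ * X)](eq_bigr (fun x => kf y * q ^+ 2 * v x)); last by move=> x Hx; rewrite ffunE (@big_pred1_eq CC) (kf_cov' _ _ Hx).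
rewrite -(@mulr_sumr CC).
move: (\sum_(x | covered x y) v x) => S.
change (q * (kf y * (lam^-1 * q * S)) - q^-1 * (lam^-1 * q * (kf y * q ^+ 2 * S)) = 0).
have q0 := q_neq0; field.
by rewrite q0 hlam.
Qed.

Lemma EF (v : CLt) : Eop (Fop v) - Fop (Eop v) = (q - q^-1)^-1 *: (Kop v - Kiop v).
Proof.
apply/ffunP => y; rewrite !ffunE /Fop /Kop /Kiop /Eop !(@big_pred1_eq CC).
rewrite [X in _ * X - _](eq_bigr (fun x => lam^-1 * q * \sum_(z | covered z x) (v z : CC))); last by move=> x _; rewrite /G ffunE.
rewrite [X in _ - _ * X](eq_bigr (fun x => lam / q ^+ D * \sum_(z | covered x z) (v z : CC))); last by move=> x _; rewrite /G ffunE.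
rewrite -!(@mulr_sumr CC) !double_sum.
rewrite [X in _ * (_ * X) - _](bigD1 y) //=.
rewrite (bigD1 y (F := fun z => #|[pred x : L | covered x y && covered x z]|%:R * (v z : CC))) //=.
rewrite [X in _ * (_ * (_ + X)) - _](eq_bigr (fun z => #|[pred x : L | covered x y && covered x z]|%:R * (v z : CC))); last first.
  by move=> z zy; rewrite offdiag // eq_sym.
move: (\sum_(i | i != y) _) => R.
have eA : #|[pred x : L | covered y x && covered y x]| = #|[pred x : L | covered y x]|.
  by apply: eq_card => x; rewrite !inE andbb.
have eB : #|[pred x : L | covered x y && covered x y]| = #|[pred x : L | covered x y]|.
  by apply: eq_card => x; rewrite !inE andbb.
rewrite eA eB.
have [hk hki] := kf_nk y; rewrite hk hki.
have hC := natQ _ _ (count_up y); have hH := natQ _ _ (count_down y).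
move: (#|[pred x : L | covered y x]|%:R : CC) (#|[pred x : L | covered x y]|%:R : CC) hC hH => C H hC hH.
transitivity (q / q ^+ ((D - \dim y) + \dim y) * (C - H) * v y).
  rewrite subnK ?dim_leD //.
  move: (v y : CC) => w.
  change (lam / q ^+ D * (lam^-1 * q * (C * w + R)) - lam^-1 * q * (lam / q ^+ D * (H * w + R)) = q / q ^+ D * (C - H) * w).
  have q0 := q_neq0; field.
  by rewrite expf_neq0 // q0 hlam.
exact: (key_id _ _ _ _ _ _ _ q_neq0 q21 hC hH).
Qed.


Lemma act_basis : action_on_basis F D lam Eop Fop Kop Kiop.
Proof.
move=> x /=; split; apply/ffunP => y.
- by rewrite G_bvec ffunE sum_bvecE.
- by rewrite G_bvec ffunE sum_bvecE.
- rewrite G_bvec ffunE bvecE eq_sym; case: eqP => [->|_]; first by []. by rewrite mulr0 scaler0.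
- rewrite G_bvec ffunE bvecE eq_sym; case: eqP => [->|_]; first by []. by rewrite mulr0 scaler0.
Qed.

Lemma uq_mod : Uq_module q CLt Eop Fop Kop Kiop.
Proof.
split; first by do !split; apply: G_lin.
split; first exact: KKi.
split; first exact: KiK.
split; first exact: EK.
split; first exact: KF.
exact: EF.
Qed.

End Main.

Theorem mainTheorem14 (F : finFieldType) (D : nat) (lam : CC) (hlam : lam != 0) :
  exists E Fo K Ki : CL F D -> CL F D,
    [/\ @Uq_module (qF F) (CL F D) E Fo K Ki,
        action_on_basis F D lam E Fo K Ki &
        forall E' Fo' K' Ki' : CL F D -> CL F D,
          @Uq_module (qF F) (CL F D) E' Fo' K' Ki' ->
          action_on_basis F D lam E' Fo' K' Ki' ->
          [/\ E' =1 E, Fo' =1 Fo, K' =1 K & Ki' =1 Ki]].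
Proof.
exists (Eop F D lam), (Fop F D lam), (Kop F D), (Kiop F D); split.
- exact: uq_mod.
- exact: act_basis.
move=> E' Fo' K' Ki' [[l1 [l2 [l3 l4]]] _] hb.
have hb0 := act_basis F D lam.
split; apply: lin_ext => //; try apply: G_lin; move=> x;
  have [a1 a2 a3 a4] := hb x; have [b1 b2 b3 b4] := hb0 x; congruence.
Qed.
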